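(* Let $T\in\{0,1\}^{\mathbb N}$ and let $\widetilde x_0=(x_0,x_1,\dots)\in\widetilde X_T$ be such that $x_n=0$ for some $n\in\mathbb N$, so that $\widetilde x_0=(f^n(0),f^{n-1}(0),\dots,f(0),0,\dots)$ and $T(n)=0$. Let $T'\in\{0,1\}^{\mathbb N}$ satisfy $T'(k)=T(k)$ for $k\ne n$ and $T'(n)=1$. Then every neighborhood of $\widetilde x_0$ in $\widetilde X$ contains, for some $\varepsilon>0$, the set $$\{\widetilde x=(x_0',x_1',\dots)\in\widetilde X_{T'}:\ x_0'\in(f^n(0)-\varepsilon,f^n(0)+\varepsilon)\}.$$
   Context: Standing setup. Fix real numbers $\rho,\delta,\gamma,\alpha$ with $0<\rho<1$, $\delta>0$, $\gamma>-\delta/\rho$, $-\delta/\rho<\alpha<0$. Define $f:[0,1]\to[0,1]$ by $f(x)=f_0(x):=\frac{\alpha x-\alpha\rho}{\gamma x+\delta}$ for $x\in[0,\rho]$ and $f(x)=f_1(x):=\frac{x-\rho}{1-\rho}$ for $x\in(\rho,1]$. Put $\rho_1:=f_0(0)$. Then $f_0$ is a decreasing bijection $[0,\rho]\to[0,\rho_1]$ and $f_1$ is an increasing bijection $(\rho,1]\to(0,1]$; write $f_0^{-1}:[0,\rho_1]\to[0,\rho]$ and $f_1^{-1}:(0,1]\to(\rho,1]$. The inverse limit is $\widetilde X=\{(x_0,x_1,\dots)\in[0,1]^{\mathbb N}: f(x_{n+1})=x_n \ \forall n\}$ with the product topology. A point $\widetilde x=(x_0,x_1,\dots)\in\widetilde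 X$ is of type $T\in\{0,1\}^{\mathbb N}$ if $x_{n+1}=f_{T(n)}^{-1}(x_n)$ for all $n$ (i.e. $x_{n+1}\in[0,\rho]$ when $T(n)=0$ and $x_{n+1}\in(\rho,1]$ when $T(n)=1$); $\widetilde X_T$ denotes the set of points of type $T$. *)

(* Defs.v *)
From HB Require Import structures.
From mathcomp Require Import all_boot all_order all_algebra.
From mathcomp Require Import all_classical all_reals all_analysis.
Set Implicit Arguments. Unset Strict Implicit. Unset Printing Implicit Defensive.
Import Order.TTheory GRing.Theory Num.Theory.
Local Open Scope ring_scope.
Local Open Scope classical_set_scope.

Section Defs.
Variable R : realType.
Variables (rho delta gamma alpha : R).

Definition params_ok : Prop :=
  [/\ 0 < rho < 1, 0 < delta, - (delta / rho) < gamma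
    & - (delta / rho) < alpha < 0].

Definition f0 (x : R) : R := (alpha * x - alpha * rho) / (gamma * x + delta).
Definition f1 (x : R) : R := (x - rho) / (1 - rho).
Definition fdyn (x : R) : R := if x <= rho then f0 x else f1 x.

Definition invlim : set (nat -> R) :=
  [set x | (forall n, 0 <= x n <= 1) /\ (forall n, fdyn (x n.+1) = x n)].

(* points of type T : x_{n+1} = f_{T(n)}^{-1}(x_n), i.e. x_{n+1} in [0,rho]
   when T(n)=0 (false) and x_{n+1} in (rho,1] when T(n)=1 (true) *)
Definition of_type (T : nat -> bool) : set (nat -> R) :=
  [set x | invlim x /\
     (forall n, if T n then rho < x n.+1 <= 1 else 0 <= x n.+1 <= rho)].

End Defs.

(* Main.v *)
Require Import Defs.
From HB Require Import structures.
From mathcomp Require Import all_boot all_order all_algebra.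
From mathcomp Require Import all_classical all_reals all_analysis.
From mathcomp Require Import ring lra zify.
Set Implicit Arguments. Unset Strict Implicit.
Import Order.TTheory GRing.Theory Num.Theory numFieldNormedType.Exports.
Local Open Scope ring_scope.
Local Open Scope classical_set_scope.

Lemma rg_pos (R : realType) (rho delta gamma alpha : R) :
  params_ok rho delta gamma alpha -> 0 < delta + rho * gamma.
Proof.
case=> /andP[r0 r1] d0 hg /andP[a1 a0].
have : rho * (- (delta / rho)) < rho * gamma by rewrite ltr_pM2l.
rewrite mulrN mulrCA divff ?mulr1; last by rewrite gt_eqF.
lra.
Qed.

Lemma den_pos (R : realType) (rho delta gamma alpha a : R) :
  params_ok rho delta gamma alpha -> 0 <= a <= rho -> 0 < gamma * a + delta.
Proof.
move=> hp; have := rg_pos hp; case: hp=> /andP[r0 r1] d0 hg /andP[a1 a0] hrg /andP[ha hb].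
have [g0|g0] := lerP 0 gamma.
  have : 0 <= gamma * a by rewrite mulr_ge0.
  lra.
have : gamma * rho <= gamma * a by rewrite ler_nM2l.
lra.
Qed.

Lemma den_le (R : realType) (rho delta gamma alpha a : R) :
  params_ok rho delta gamma alpha -> 0 <= a <= rho -> gamma * a + delta <= delta + `|gamma|.
Proof.
case=> /andP[r0 r1] d0 hg /andP[a1 a0] /andP[ha hb].
have : gamma * a <= `|gamma| * a by rewrite ler_wpM2r // ler_norm.
have : `|gamma| * a <= `|gamma| * 1 by rewrite ler_wpM2l //; lra.
lra.
Qed.

Definition K0 (R : realType) (rho delta gamma alpha : R) :=
  (delta + `|gamma|) ^+ 2 / ((- alpha) * (delta + rho * gamma)).

Lemma f0_lip (R : realType) (rho delta gamma alpha a b : R) :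
  params_ok rho delta gamma alpha -> 0 <= a <= rho -> 0 <= b <= rho ->
  `|a - b| <= K0 rho delta gamma alpha * `|f0 rho delta gamma alpha a - f0 rho delta gamma alpha b|.
Proof.
move=> hp ha hb.
have da := den_pos hp ha; have db := den_pos hp hb.
have la := den_le hp ha; have lb := den_le hp hb.
have hrg := rg_pos hp.
have a0 : 0 < - alpha by case: hp => _ _ _ /andP[_ ?]; lra.
have -> : f0 rho delta gamma alpha a - f0 rho delta gamma alpha b =
  alpha * (delta + rho * gamma) * (a - b) / ((gamma * a + delta) * (gamma * b + delta)).
  rewrite /f0; field; apply/andP; split; rewrite gt_eqF //.
set D := (gamma * a + delta) * (gamma * b + delta).
have D0 : 0 < D by rewrite mulr_gt0.
have DM : D <= (delta + `|gamma|) ^+ 2 by rewrite expr2 /D ler_pM // ltW.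
rewrite /K0 normrM normrV ?unitfE ?gt_eqF // (gtr0_norm D0) normrM normrM.
rewrite (ltr0_norm (x := alpha)) ?(gtr0_norm hrg); last lra.
have -> : (delta + `|gamma|) ^+ 2 / (- alpha * (delta + rho * gamma)) *
  (- alpha * (delta + rho * gamma) * `|a - b| / D) = (delta + `|gamma|) ^+ 2 * `|a - b| / D.
  field. have an : alpha != 0 by rewrite lt_eqF //; lra.
  by rewrite an (gt_eqF D0) (gt_eqF hrg).
rewrite ler_pdivlMr // mulrC ler_wpM2r //.
Qed.
Lemma f1_lip (R : realType) (rho a b : R) : rho < 1 ->
  `|a - b| = (1 - rho) * `|f1 rho a - f1 rho b|.
Proof.
move=> r1; have h : 0 < 1 - rho by lra.
have -> : f1 rho a - f1 rho b = (a - b) / (1 - rho).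
  rewrite /f1; field; rewrite gt_eqF //.
by rewrite normrM normrV ?unitfE ?gt_eqF // (gtr0_norm h) mulrCA divff ?mulr1 // gt_eqF.
Qed.

Lemma fdyn_lo (R : realType) (rho delta gamma alpha y : R) : y <= rho ->
  fdyn rho delta gamma alpha y = f0 rho delta gamma alpha y.
Proof. by move=> h; rewrite /fdyn h. Qed.

Lemma fdyn_hi (R : realType) (rho delta gamma alpha y : R) : rho < y ->
  fdyn rho delta gamma alpha y = f1 rho y.
Proof. by move=> h; rewrite /fdyn lt_geF. Qed.

Lemma K0_pos (R : realType) (rho delta gamma alpha : R) :
  params_ok rho delta gamma alpha -> 0 < K0 rho delta gamma alpha.
Proof.
move=> hp; have hrg := rg_pos hp.
case: hp => /andP[r0 r1] d0 hg /andP[a1 a0].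
have hm : 0 < delta + `|gamma| by have := normr_ge0 gamma; lra.
rewrite /K0 divr_gt0 ?exprn_gt0 // mulr_gt0 //; lra.
Qed.

Lemma step (R : realType) (rho delta gamma alpha : R)
  (Hpar : params_ok rho delta gamma alpha)
  (T T' : nat -> bool) (x0 x : nat -> R) (n : nat)
  (Hx0 : of_type rho delta gamma alpha T x0) (Hxn : x0 n = 0)
  (HTn : T' n = true) (HT : forall k, k != n -> T' k = T k)
  (Hx : of_type rho delta gamma alpha T' x) (k : nat) :
  `|x k.+1 - x0 k.+1| <= (1 - rho + K0 rho delta gamma alpha) * `|x k - x0 k|.
Proof.
have K0p := K0_pos Hpar.
have [/andP[r0 r1] d0 hg /andP[a1 a0]] := Hpar.
have hrg := rg_pos Hpar.
case: Hx0 => [[_ Fx0] Tx0]; case: Hx => [[_ Fx] Tx].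
have nn : 0 <= `|x k - x0 k| by [].
have [->|kn] := eqVneq k n.
  have := Tx n; rewrite HTn => /andP[h1 h2].
  have e1 := Fx n; rewrite fdyn_hi // in e1.
  have x0r : x0 n.+1 = rho.
    have := Tx0 n; case: (T n) => /andP[g1 g2].
      have := Fx0 n; rewrite fdyn_hi // Hxn /f1 => /eqP.
      rewrite mulf_eq0 invr_eq0 !subr_eq0 => /orP[/eqP|/eqP]; lra.
    have := Fx0 n; rewrite fdyn_lo // Hxn /f0 => /eqP.
    have dp := den_pos Hpar (a := x0 n.+1); rewrite g1 g2 /= in dp.
    rewrite mulf_eq0 invr_eq0 (gt_eqF (dp isT)) orbF -mulrBr mulf_eq0 (lt_eqF a0) /=.
    by rewrite subr_eq0 => /eqP.
  rewrite (@f1_lip _ rho (x n.+1) (x0 n.+1) r1) e1 x0r -Fx0 x0r fdyn_lo // /f0.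
  rewrite subrr mul0r.
  have : 0 <= K0 rho delta gamma alpha * `|x n - f1 rho rho| by rewrite mulr_ge0 // ltW.
  rewrite /f1 subrr mul0r; lra.
have := Tx k; have := Tx0 k; rewrite HT //; case: (T k) => /andP[g1 g2] /andP[h1 h2].
  rewrite (@f1_lip _ rho (x k.+1) (x0 k.+1) r1) -(fdyn_hi delta gamma alpha h1) -(fdyn_hi delta gamma alpha g1) Fx Fx0.
  have : 0 <= K0 rho delta gamma alpha * `|x k - x0 k| by rewrite mulr_ge0 // ltW.
  lra.
have := f0_lip Hpar (a := x k.+1) (b := x0 k.+1).
rewrite h1 h2 g1 g2 => /(_ isT isT).
rewrite -(fdyn_lo delta gamma alpha h2) -(fdyn_lo delta gamma alpha g2) Fx Fx0.
have : 0 <= (1 - rho) * `|x k - x0 k| by rewrite mulr_ge0 //; lra.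
lra.
Qed.
Lemma x0_iter (R : realType) (rho delta gamma alpha : R) (T : nat -> bool) (x0 : nat -> R) (n : nat)
  (Hx0 : of_type rho delta gamma alpha T x0) (Hxn : x0 n = 0) :
  x0 0%N = iter n (fdyn rho delta gamma alpha) 0.
Proof.
case: Hx0 => [[_ F] _].
suff H : forall j, (j <= n)%N -> x0 (n - j)%N = iter j (fdyn rho delta gamma alpha) 0.
  by rewrite -(H n) // subnn.
elim=> [|j IH] hj; first by rewrite subn0.
rewrite iterS -IH; last exact: ltnW.
have -> : (n - j)%N = (n - j.+1).+1 by lia.
by rewrite F.
Qed.

Unset Implicit Arguments.
Theorem lemma3 (R : realType) (rho delta gamma alpha : R)
  (Hpar : params_ok rho delta gamma alpha)
  (T : nat -> bool) (x0 : nat -> R) (n : nat)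
  (Hx0 : of_type rho delta gamma alpha T x0) (Hxn : x0 n = 0) :
  let T' := fun k : nat => if k == n then true else T k in
  forall U : set {ptws nat -> R},
    within (invlim rho delta gamma alpha) (nbhs (x0 : {ptws nat -> R})) U ->
    exists2 eps : R, 0 < eps &
      forall x : nat -> R, of_type rho delta gamma alpha T' x ->
        `| x 0%N - iter n (fdyn rho delta gamma alpha) 0 | < eps -> U x.
Proof.
move=> T' U hU.
rewrite -(x0_iter Hx0 Hxn).
set K := 1 - rho + K0 rho delta gamma alpha.
have Kp : 0 < K.
  have := K0_pos Hpar; case: Hpar => /andP[r0 r1] _ _ _; rewrite /K; lra.
have bnd : forall x, of_type rho delta gamma alpha T' x -> forall k,
    `|x k - x0 k| <= K ^+ k * `|x 0%N - x0 0%N|.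
  move=> x hx; elim=> [|k IH]; first by rewrite expr0 mul1r.
  apply: le_trans (step Hpar Hx0 Hxn _ _ hx k) _.
  - by rewrite /T' eqxx.
  - by move=> j /negbTE hj; rewrite /T' hj.
  by rewrite exprS -mulrA ler_wpM2l // ltW.
pose S (e : R) := [set x : {ptws nat -> R} | of_type rho delta gamma alpha T' x /\ `|x 0%N - x0 0%N| < e].
pose G := filter_from [set e : R | 0 < e] S.
have FG : Filter G.
  apply: filter_from_filter; first by exists 1; rewrite /= ltr01.
  move=> i j /= i0 j0; exists (Num.min i j); first by rewrite /= lt_min i0 j0.
  by move=> x [hx he]; rewrite lt_min in he; case/andP: he => h1 h2; split.
have cG : G --> (x0 : {ptws nat -> R}).
  apply/pointwise_cvgP => t.
  apply/cvgrPdist_lt => eps eps0.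
  exists (eps / K ^+ t); first by rewrite /= divr_gt0 // exprn_gt0.
  move=> x [hx he] /=.
  rewrite distrC; apply: le_lt_trans (bnd x hx t) _.
  by rewrite -ltr_pdivlMl ?exprn_gt0 // mulrC.
have hU' := cG _ hU.
case: hU' => e /= e0 hS.
exists e => // x hx he.
by have := hS x (conj hx he); apply; case: hx.
Qed.
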